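(* Let $Q$ and $W$ satisfy the standing assumptions with $W=Y$, let $l\ge1$, and assume $Q$ is future unique w.r.t. $I^l_l$. Then $\hat Q^{l\triangledown}$ and $\hat Q^{I^l_l}$ are bisimilar w.r.t. $Y$, and $\hat Q^{I^l_l}$ is simulated by $\hat Q^{I^l_0}$ w.r.t. $Y$.
   Context: Strings and signals: $\diamond$ is a symbol not in any other set considered. For a set $A$ and $l\in\mathbb N_0$, $A^l$ is the set of strings of length $l$ over $A$, indexed $\zeta=\zeta(0)\cdots\zeta(l-1)$; $\lambda$ is the empty string and $\cdot$ denotes concatenation. For a map $w$ on $\mathbb Z$ (or a string) and integers $t_1\le t_2$, $w|_{[t_1,t_2]}=w(t_1)\cdots w(t_2)$ is the string of length $t_2-t_1+1$ (absolute time forgotten); if $t_2<t_1$ it is $\lambda$. State machines: a state machine is $Q=(X,U,Y,\delta,X_0)$ with $X_0\subseteq X$, $\delta\subseteq X\times U\times Y\times X$. Let $H_\delta(x)=\{y:\exists u,x'.\,(x,u,y,x')\in\delta\}$, $F_\delta(x,u)=\{x':\exists y\in H_\delta(x).\,(x,u,y,x')\in\delta\}$. The full behavior $\mathcal B_f(Q)$ is the set of $(\mu,\nu,\xi)\in(U\times Y\times X)^{\mathbb N_0}$ with $\xi(0)\in X_0$ and $(\xi(k),\mu(k),\nu(k),\xi(k+1))\in\delta$ for all $k\in\mathbb N_0$. $Q$ is live and reachable if every $x\in X_0$ is $\xi(0)$ for some $(\mu,\nu,\xi)\in\mathcal B_f(Q)$ and every $x\in X$ is $\xi(k)$ for some such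 trajectory and some $k$. Standing assumptions: $Q=(X,U,Y,\delta,X_0)$ is live and reachable and satisfies $(x,u,y,x')\in\delta\iff(x'\in F_\delta(x,u)\wedge y\in H_\delta(x))$ for all $x,x'\in X,u\in U,y\in Y$; the external signal space $W$ is finite and either $W=U\times Y$ or $W=Y$ (here $W=Y$, with $\pi_W(u,y)=\pi_Y(u,y)=y$). Behaviors: $\mathcal B_S(Q)$ is the set of pairs $(w,\xi)$ of maps on $\mathbb Z$ with $w(k)=\xi(k)=\diamond$ for $k<0$ and $(w(k),\xi(k))=(\nu(k),\xi'(k))$ for $k\ge0$, for some $(\mu,\nu,\xi')\in\mathcal B_f(Q)$. Corresponding strings: for integers $a,b$ and $x\in X$, $E^{[a,b]}(x)=\{\zeta:\exists(w,\xi)\in\mathcal B_S(Q),k\in\mathbb N_0:\ \xi(k)=x,\ \zeta=w|_{[k+a,k+b]}\}$. For $l,m\in\mathbb N_0$ with $m\le l$, $I^l_m=[m-l,m-1]$; in particular $I^l_l=[0,l-1]$, $I^l_0=[-l,-1]$. Future uniqueness: $Q$ is future unique w.r.t. $I^l_m$ if for all $x\in X$ and $\zeta,\zeta'\in E^{I^l_m}(x)$, $\zeta|_{[l-m,l-1]}=\zeta'|_{[l-m,l-1]}$. Abstract state machine: $\hat Q^{I^l_m}=(\hat X^{I^l_m},U,Y,\hat\delta^{I^l_m},\hat X^{I^l_m}_0)$ with $\hat X^{I^l_m}=\bigcup_{x\in X}E^{I^l_m}(x)$, $\hat X^{I^l_m}_0=\bigcup_{x\in X_0}E^{I^l_m}(x)$,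 and $(\hat x,u,y,\hat x')\in\hat\delta^{I^l_m}$ iff (1) $\hat x'|_{[0,l-m-1]}=(\hat x|_{[0,l-m-1]}\cdot\pi_W(u,y))|_{[1,l-m]}$, (2) $\hat x|_{[l-m,l-1]}=(\pi_W(u,y)\cdot\hat x'|_{[l-m,l-2]})|_{[0,m-1]}$, and (3) there are $x,x'\in X$ with $\hat x\in E^{I^l_m}(x)$, $\hat x'\in E^{I^l_m}(x')$, $(x,u,y,x')\in\delta$. Quotient state machine (for $W=Y$): $\hat Q^{l\triangledown}=(\hat X^{l\triangledown},U,Y,\hat\delta^{l\triangledown},\hat X^{l\triangledown}_0)$ with $\hat X^{l\triangledown}=\{E^{I^l_l}(x):x\in X\}$, $\hat X^{l\triangledown}_0=\{E^{I^l_l}(x):x\in X_0\}$, and $(\hat x,u,y,\hat x')\in\hat\delta^{l\triangledown}$ iff there exist $x,x'\in X$ with $\hat x=E^{I^l_l}(x)$, $\hat x'=E^{I^l_l}(x')$ and $(x,u,y,x')\in\delta$. Simulation relations: for state machines $Q_i=(X_i,U,Y,\delta_i,X_{0,i})$, $i=1,2$, and $V\in\{U\times Y,Y\}$, a relation $\mathcal R\subseteq X_1\times X_2$ is a simulation relation from $Q_1$ to $Q_2$ w.r.t. $V$ if (a) for every $x_1\in X_{0,1}$ there is $x_2\in X_{0,2}$ with $(x_1,x_2)\in\mathcal R$, and (b) for all $(x_1,x_2)\in\mathcal R$ and $(x_1,u_1,y_1,x_1')\in\delta_1$ there exist $u_2,y_2,x_2'$ with $(x_2,u_2,y_2,x_2')\in\delta_2$,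 $(x_1',x_2')\in\mathcal R$ and $\pi_V(u_1,y_1)=\pi_V(u_2,y_2)$. $Q_1$ is simulated by $Q_2$ w.r.t. $V$ if such a relation exists; $Q_1,Q_2$ are bisimilar w.r.t. $V$ if there is a simulation relation $\mathcal R$ from $Q_1$ to $Q_2$ w.r.t. $V$ such that $\mathcal R^{-1}=\{(x_2,x_1):(x_1,x_2)\in\mathcal R\}$ is a simulation relation from $Q_2$ to $Q_1$ w.r.t. $V$. *)

(* Defs.v *)
From mathcomp Require Import all_boot.
From Stdlib Require Import ZArith.

Set Implicit Arguments.
Unset Strict Implicit.
Unset Printing Implicit Defensive.

(* A state machine (X,U,Y,delta,X0) with a carrier type S; the state set X
   is the predicate sm_st. *)
Record SM (S U Y : Type) := mkSM {
  sm_st : S -> Prop;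
  sm_tr : S -> U -> Y -> S -> Prop;
  sm_init : S -> Prop }.

(* w|_[t1,t2] for a map w on Z: string of length t2-t1+1 (empty if t2<t1). *)
Definition restr (T : Type) (w : Z -> T) (t1 t2 : Z) : seq T :=
  map (fun i : nat => w (t1 + Z.of_nat i)%Z) (iota 0 (Z.to_nat (t2 - t1 + 1))).

Definition strfun (T : Type) (d : T) (s : seq T) : Z -> T :=
  fun k => nth d s (Z.to_nat k).

Definition srestr (T : Type) (d : T) (s : seq T) (t1 t2 : Z) : seq T :=
  restr (strfun d s) t1 t2.

(* The diamond symbol is None; signals/strings over Y ∪ {◇} are over option Y. *)

Section Machine.
Variables (X U Y : Type).
Variable delta : X -> U -> Y -> X -> Prop.
Variable X0 : X -> Prop.

Definition Hdelta (x : X) (y : Y) : Prop := exists u x', delta x u y x'.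
Definition Fdelta (x : X) (u : U) (x' : X) : Prop :=
  exists y, Hdelta x y /\ delta x u y x'.

Definition Bf (mu : nat -> U) (nu : nat -> Y) (xi : nat -> X) : Prop :=
  X0 (xi 0) /\ forall k : nat, delta (xi k) (mu k) (nu k) (xi k.+1).

Definition live_reachable : Prop :=
  (forall x, X0 x -> exists mu nu xi, Bf mu nu xi /\ xi 0 = x) /\
  (forall x, exists mu nu xi (k : nat), Bf mu nu xi /\ xi k = x).

Definition standing_delta : Prop :=
  forall x u y x', delta x u y x' <-> (Fdelta x u x' /\ Hdelta x y).

Definition BS (w : Z -> option Y) (xi : Z -> option X) : Prop :=
  exists mu nu xi', Bf mu nu xi' /\
    forall k : Z,
      ((k < 0)%Z -> w k = None /\ xi k = None) /\
      ((0 <= k)%Z -> w k = Some (nu (Z.to_nat k)) /\ xi k = Some (xi' (Z.to_nat k))).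

Definition Estr (a b : Z) (x : X) (zeta : seq (option Y)) : Prop :=
  exists w xi (k : nat), BS w xi /\ xi (Z.of_nat k) = Some x /\
    zeta = restr w (Z.of_nat k + a)%Z (Z.of_nat k + b)%Z.

Definition Ilo (l m : nat) : Z := (Z.of_nat m - Z.of_nat l)%Z.
Definition Ihi (l m : nat) : Z := (Z.of_nat m - 1)%Z.

Definition EI (l m : nat) (x : X) := Estr (Ilo l m) (Ihi l m) x.

Definition future_unique (l m : nat) : Prop :=
  forall x zeta zeta', EI l m x zeta -> EI l m x zeta' ->
    srestr None zeta (Z.of_nat l - Z.of_nat m) (Z.of_nat l - 1) =
    srestr None zeta' (Z.of_nat l - Z.of_nat m) (Z.of_nat l - 1).

(* abstract state machine \hat Q^{I^l_m}, with pi_W(u,y) = y *)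
Definition abstractSM (l m : nat) : SM (seq (option Y)) U Y :=
  {| sm_st := fun xh => exists x, EI l m x xh;
     sm_init := fun xh => exists x, X0 x /\ EI l m x xh;
     sm_tr := fun xh u y xh' =>
       let L := Z.of_nat l in let M := Z.of_nat m in
       srestr None xh' 0 (L - M - 1) =
         srestr None (srestr None xh 0 (L - M - 1) ++ [:: Some y]) 1 (L - M) /\
       srestr None xh (L - M) (L - 1) =
         srestr None (Some y :: srestr None xh' (L - M) (L - 2)) 0 (M - 1) /\
       exists x x', EI l m x xh /\ EI l m x' xh' /\ delta x u y x' |}.

Definition quotientSM (l : nat) : SM (seq (option Y) -> Prop) U Y :=
  {| sm_st := fun S => exists x, S = EI l l x;
     sm_init := fun S => exists x, X0 x /\ S = EI l l x;
     sm_tr := fun S u y S' =>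
       exists x x', S = EI l l x /\ S' = EI l l x' /\ delta x u y x' |}.

End Machine.

(* V ∈ {U×Y, Y} *)
Inductive extspace := VUY | VY.

Definition piV_eq (V : extspace) (U Y : Type) (u1 : U) (y1 : Y) (u2 : U) (y2 : Y)
  : Prop :=
  match V with VUY => u1 = u2 /\ y1 = y2 | VY => y1 = y2 end.

Definition is_simulation (V : extspace) (S1 S2 U Y : Type)
  (Q1 : SM S1 U Y) (Q2 : SM S2 U Y) (R : S1 -> S2 -> Prop) : Prop :=
  (forall x1 x2, R x1 x2 -> sm_st Q1 x1 /\ sm_st Q2 x2) /\
  (forall x1, sm_init Q1 x1 -> exists x2, sm_init Q2 x2 /\ R x1 x2) /\
  (forall x1 x2 u1 y1 x1', R x1 x2 -> sm_tr Q1 x1 u1 y1 x1' ->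
     exists u2 y2 x2', sm_tr Q2 x2 u2 y2 x2' /\ R x1' x2' /\ piV_eq V u1 y1 u2 y2).

Definition simulated_by (V : extspace) (S1 S2 U Y : Type)
  (Q1 : SM S1 U Y) (Q2 : SM S2 U Y) : Prop :=
  exists R, is_simulation V Q1 Q2 R.

Definition bisimilar (V : extspace) (S1 S2 U Y : Type)
  (Q1 : SM S1 U Y) (Q2 : SM S2 U Y) : Prop :=
  exists R, is_simulation V Q1 Q2 R /\
            is_simulation V Q2 Q1 (fun x2 x1 => R x1 x2).

(* Main.v *)
Require Import Defs.
From Stdlib Require Import ZArith Lia FunctionalExtensionality PropExtensionality.
From mathcomp Require Import all_boot zify.

Set Implicit Arguments.
Unset Strict Implicit.
Unset Printing Implicit Defensive.

Lemma size_restr T (w : Z -> T) a b : size (restr w a b) = Z.to_nat (b - a + 1).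
Proof. by rewrite /restr size_map size_iota. Qed.

Lemma nth_restr T (w : Z -> T) a b d i : (i < Z.to_nat (b - a + 1))%N ->
  nth d (restr w a b) i = w (a + Z.of_nat i)%Z.
Proof. move=> Hi; by rewrite /restr (nth_map 0%N) ?size_iota // nth_iota. Qed.

Lemma srestr_nil T (d : T) s a b : (b - a + 1 <= 0)%Z -> srestr d s a b = [::].
Proof. move=> H; apply/size0nil; rewrite /srestr size_restr; lia. Qed.

Lemma srestr_gen T (d : T) s a b a' n : a = Z.of_nat a' -> b = (Z.of_nat (a' + n) - 1)%Z ->
  (a' + n <= size s)%N -> srestr d s a b = take n (drop a' s).
Proof.
move=> -> -> H; apply: (eq_from_nth (x0:=d)).
  rewrite /srestr size_restr size_takel ?size_drop; lia.
move=> i; rewrite /srestr size_restr => Hi.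
rewrite nth_restr // /strfun nth_take; last lia.
rewrite nth_drop; congr nth; lia.
Qed.

Lemma srestr_take T (d : T) s a b n : a = 0%Z -> b = (Z.of_nat n - 1)%Z ->
  (n <= size s)%N -> srestr d s a b = take n s.
Proof. move=> Ha Hb Hn; rewrite (@srestr_gen _ d s a b 0 n) //= drop0 //. Qed.
Section M.
Variables (X U : Type) (Y : finType).
Variable delta : X -> U -> Y -> X -> Prop.
Variable X0 : X -> Prop.

Definition sw (nu : nat -> Y) : Z -> option Y :=
  fun k => if (k <? 0)%Z then None else Some (nu (Z.to_nat k)).
Definition sx (xi : nat -> X) : Z -> option X :=
  fun k => if (k <? 0)%Z then None else Some (xi (Z.to_nat k)).

Lemma sw_of nu (z : Z) (n : nat) : z = Z.of_nat n -> sw nu z = Some (nu n).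
Proof. move->; rewrite /sw; case: Z.ltb_spec; [lia| by rewrite Nat2Z.id]. Qed.
Lemma sw_neg nu (z : Z) : (z < 0)%Z -> sw nu z = None.
Proof. rewrite /sw; case: Z.ltb_spec => //; lia. Qed.

Lemma BS_inv w xi : BS delta X0 w xi ->
  exists mu nu xi', Bf delta X0 mu nu xi' /\ w = sw nu /\ xi = sx xi'.
Proof.
case=> mu [nu [xi' [Hb H]]]; exists mu, nu, xi'; split=> //; split;
 apply: functional_extensionality => k; rewrite /sw /sx;
 case: Z.ltb_spec => Hk; have [H1 H2] := H k.
- by case: (H1 Hk).
- by case: (H2 Hk).
- by case: (H1 Hk).
- by case: (H2 Hk).
Qed.

Lemma EI_iff l m x s : EI delta X0 l m x s <->
  exists mu nu xi (k : nat), Bf delta X0 mu nu xi /\ xi k = x /\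
   s = restr (sw nu) (Z.of_nat k + Ilo l m) (Z.of_nat k + Ihi l m).
Proof.
split.
- case=> w [xi [k [HB [Hx ->]]]].
  case: (BS_inv HB) => mu [nu [xi' [Hb [-> Hxi]]]].
  exists mu, nu, xi', k; split=> //; split=> //.
  move: Hx; rewrite Hxi /sx; case: Z.ltb_spec; [lia|].
  by rewrite Nat2Z.id => _ [].
- case=> mu [nu [xi [k [Hb [Hx ->]]]]].
  exists (sw nu), (sx xi), k; split; last split=> //.
  + exists mu, nu, xi; split=> // k0; rewrite /sw /sx; split=> Hk;
     case: Z.ltb_spec; lia || done.
  + rewrite /sx; case: Z.ltb_spec; [lia|]. by rewrite Nat2Z.id Hx.
Qed.

Lemma EI_size l m x s : EI delta X0 l m x s -> (m <= l)%N -> size s = l.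
Proof. case/EI_iff=> mu [nu [xi [k [_ [_ ->]]]]] Hm; rewrite size_restr /Ilo /Ihi; lia. Qed.

Lemma glue mu1 nu1 xi1 j x u y x' mu2 nu2 xi2 k :
  Bf delta X0 mu1 nu1 xi1 -> xi1 j = x -> delta x u y x' ->
  Bf delta X0 mu2 nu2 xi2 -> xi2 k = x' ->
  exists mu nu xi, Bf delta X0 mu nu xi /\ xi j = x /\ nu j = y /\
     forall i, nu (j + i.+1)%N = nu2 (k + i)%N.
Proof.
move=> [H01 H1] Hx Hd [H02 H2] Hx'.
exists (fun t => if (t < j)%N then mu1 t else if t == j then u else mu2 (t - j.+1 + k)%N).
exists (fun t => if (t < j)%N then nu1 t else if t == j then y else nu2 (t - j.+1 + k)%N).
exists (fun t => if (t <= j)%N then xi1 t else xi2 (t - j.+1 + k)%N).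
split; [split|split].
- by rewrite leq0n.
- move=> t /=; case: (ltngtP t j) => Ht.
  + by apply: H1.
  + have -> : (t.+1 - j.+1 + k = (t - j.+1 + k).+1)%N by lia. by apply: H2.
  + subst t. by rewrite subnn add0n Hx Hx'.
- by rewrite leqnn.
split; first by rewrite ltnn eqxx.
move=> i; rewrite ifF; last lia. rewrite ifF; last lia. congr nu2; lia.
Qed.

Variable l : nat.
Hypothesis LR : live_reachable delta X0.
Hypothesis FU : future_unique delta X0 l l.
Hypothesis Hl : (1 <= l)%N.

Lemma EI_uniq x a b : EI delta X0 l l x a -> EI delta X0 l l x b -> a = b.
Proof.
move=> Ha Hb; have := FU Ha Hb.
have sa := EI_size Ha (leqnn l); have sb := EI_size Hb (leqnn l).
rewrite (@srestr_take _ _ a _ _ l) ?sa //; try lia.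
rewrite (@srestr_take _ _ b _ _ l) ?sb //; try lia.
by rewrite !take_oversize ?sa ?sb.
Qed.

Lemma reach x : exists mu nu xi k, Bf delta X0 mu nu xi /\ xi k = x.
Proof. case: LR => _ H; case: (H x) => mu [nu [xi [k [? ?]]]]; by exists mu, nu, xi, k. Qed.

Lemma EI_ex x : exists xh, EI delta X0 l l x xh.
Proof.
case: (reach x) => mu [nu [xi [k [Hb Hx]]]].
eexists; apply/EI_iff; exists mu, nu, xi, k; split=> //; split=> //.
Qed.

Lemma F1 x u y x' xh xh' : EI delta X0 l l x xh -> delta x u y x' ->
  EI delta X0 l l x' xh' -> xh = Some y :: take (l-1) xh'.
Proof.
move=> Hxh Hd Hxh'.
have sxh' := EI_size Hxh' (leqnn l).
case/EI_iff: Hxh' => mu2 [nu2 [xi2 [k [Hb2 [Hx2 E2]]]]].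
case: (reach x) => mu1 [nu1 [xi1 [j [Hb1 Hx1]]]].
case: (glue Hb1 Hx1 Hd Hb2 Hx2) => mu [nu [xi [Hb [Hxj [Hnu Hf]]]]].
have HE : EI delta X0 l l x (restr (sw nu) (Z.of_nat j + Ilo l l) (Z.of_nat j + Ihi l l)).
  apply/EI_iff; exists mu, nu, xi, j; split=> //.
rewrite (EI_uniq Hxh HE).
apply: (eq_from_nth (x0:=None)).
  rewrite size_restr /= size_takel /Ilo /Ihi; lia.
move=> i; rewrite size_restr /Ilo /Ihi => Hi; rewrite nth_restr; last lia.
case: i Hi => [|i] Hi.
  by rewrite (@sw_of _ _ (j)) ?Hnu //; lia.
rewrite [nth _ (_ :: _) _]/= nth_take; last lia.
rewrite E2 nth_restr; last (rewrite /Ilo /Ihi; lia).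
rewrite (@sw_of nu _ (j + i.+1)%N); last lia.
rewrite (@sw_of nu2 _ (k + i)%N); last (rewrite /Ilo; lia).
by rewrite Hf.
Qed.

Definition realP s := exists mu nu xi (K : nat), Bf delta X0 mu nu xi /\
  s = restr (sw nu) (Z.of_nat K - Z.of_nat l) (Z.of_nat K).

Lemma F2 x u y x' xh' : delta x u y x' -> EI delta X0 l l x' xh' -> realP (Some y :: xh').
Proof.
move=> Hd Hxh'.
have sxh' := EI_size Hxh' (leqnn l).
case/EI_iff: Hxh' => mu2 [nu2 [xi2 [k [Hb2 [Hx2 E2]]]]].
case: (reach x) => mu1 [nu1 [xi1 [j [Hb1 Hx1]]]].
case: (glue Hb1 Hx1 Hd Hb2 Hx2) => mu [nu [xi [Hb [Hxj [Hnu Hf]]]]].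
exists mu, nu, xi, (j + l)%N; split=> //.
apply: (eq_from_nth (x0:=None)).
  rewrite size_restr /=; lia.
move=> i; rewrite /= sxh' => Hi; rewrite nth_restr; last lia.
case: i Hi => [|i] Hi.
  by rewrite (@sw_of _ _ (j)) ?Hnu //; lia.
rewrite [nth _ (_ :: _) _]/= E2 nth_restr; last (rewrite /Ilo /Ihi; lia).
rewrite (@sw_of nu _ (j + i.+1)%N); last lia.
rewrite (@sw_of nu2 _ (k + i)%N); last (rewrite /Ilo; lia).
by rewrite Hf.
Qed.

Lemma F3 xp y : size xp = l -> realP (xp ++ [:: Some y]) ->
  exists z u2 z', delta z u2 y z' /\ EI delta X0 l 0 z xp /\
    EI delta X0 l 0 z' (drop 1 (xp ++ [:: Some y])).
Proof.
move=> sxp [mu [nu [xi [K [[H0 Hb] E]]]]].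
have Hy : nu K = y.
  have := congr1 (nth None ^~ l) E.
  rewrite nth_cat sxp ltnn subnn /= nth_restr; last lia.
  by rewrite (@sw_of _ _ (K)); [case|lia].
exists (xi K), (mu K), (xi K.+1); split; first by rewrite -Hy; apply: Hb.
split; apply/EI_iff.
- exists mu, nu, xi, K; split=> //; split=> //.
  apply: (eq_from_nth (x0:=None)).
    rewrite size_restr /Ilo /Ihi; lia.
  move=> i; rewrite sxp => Hi.
  have := congr1 (nth None ^~ i) E; rewrite nth_cat sxp Hi => ->.
  rewrite !nth_restr /Ilo /Ihi; try lia. congr sw; lia.
- exists mu, nu, xi, K.+1; split=> //; split=> //.
  apply: (eq_from_nth (x0:=None)).
    rewrite size_drop size_cat sxp size_restr /Ilo /Ihi [size _]/=; lia.
  move=> i; rewrite size_drop size_cat sxp [size _]/= => Hi.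
  rewrite nth_drop E !nth_restr /Ilo /Ihi; try lia. congr sw; lia.
Qed.

End M.

Lemma win_first T (a : T) xp xh l : size xp = l -> (exists r, xh = a :: r) ->
  take l.+1 (drop 0 (xp ++ xh)) = xp ++ [:: a].
Proof.
move=> sxp [r ->]; rewrite drop0 take_cat sxp ifF; last lia.
by rewrite subSnn /= take0.
Qed.

Lemma win_last T (a : T) xp xh' l : size xp = l -> size xh' = l -> (1 <= l)%N ->
  take l.+1 (drop (l-1) (drop 1 (xp ++ [:: a]) ++ xh')) = a :: xh'.
Proof.
move=> sxp sxh' Hl; apply: (eq_from_nth (x0:=a)).
  rewrite size_takel /= ?sxh' //; rewrite size_drop size_cat size_drop size_cat sxp sxh' [size [:: _]]/=; lia.
move=> i; rewrite size_takel; last by rewrite size_drop size_cat size_drop size_cat sxp sxh' [size [:: _]]/=; lia.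
move=> Hi; rewrite nth_take // nth_drop nth_cat size_drop size_cat sxp [size [:: _]]/=.
case: i Hi => [|i] Hi.
  rewrite ifT; last lia. rewrite nth_drop nth_cat sxp ifF; last lia.
  by have -> : (1 + (l - 1 + 0) - l = 0)%N by lia.
rewrite ifF; last lia. rewrite [nth _ (_ :: _) _]/=. congr nth; lia.
Qed.

Lemma win_shift T (a : T) (xp xh xh' : seq T) l j :
  size xp = l -> size xh' = l -> xh = a :: take (l-1) xh' -> (j.+1 < l)%N ->
  take l.+1 (drop j (drop 1 (xp ++ [:: a]) ++ xh')) = take l.+1 (drop j.+1 (xp ++ xh)).
Proof.
move=> sxp sxh' E Hj.
have sxh : size xh = l by rewrite E /= size_takel; lia.
have s1 : size (drop 1 (xp ++ [:: a])) = l by rewrite size_drop size_cat sxp [size [:: _]]/=; lia.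
apply: (eq_from_nth (x0:=a)).
  rewrite !size_takel // size_drop size_cat ?s1 ?sxp ?sxh' ?sxh; lia.
move=> i; rewrite size_takel; last by rewrite size_drop size_cat ?s1 ?sxh'; lia.
move=> Hi; rewrite !nth_take // !nth_drop !nth_cat s1 sxp.
case: (ltnP (j + i) l) => H1.
  rewrite nth_drop nth_cat sxp.
  case: (ltnP (1 + (j+i)) l) => H2.
    congr nth; lia.
  have -> : (j.+1 + i - l = 0)%N by lia.
  try (have -> : (1 + (j + i) - l = 0)%N by lia).
  by rewrite E.
rewrite ifF; last lia.
rewrite E; have -> : (j.+1 + i - l = (j + i - l).+1)%N by lia.
rewrite [nth _ (_ :: _) _]/= nth_take //; lia.
Qed.

Theorem corollary13 (X U : Type) (Y : finType)
  (delta : X -> U -> Y -> X -> Prop) (X0 : X -> Prop) (l : nat) :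
  live_reachable delta X0 ->
  standing_delta delta ->
  (1 <= l)%N ->
  future_unique delta X0 l l ->
  bisimilar VY (quotientSM delta X0 l) (abstractSM delta X0 l l) /\
  simulated_by VY (abstractSM delta X0 l l) (abstractSM delta X0 l 0).
Proof.
move=> LR _ Hl FU; split.
- exists (fun S xh => exists x, S = EI delta X0 l l x /\ EI delta X0 l l x xh).
  split.
  + split.
      move=> S xh [x [-> H]]; split; by exists x.
    split.
      move=> S [x [H0 ->]]; case: (EI_ex l LR x) => xh Hxh.
      exists xh; split; by exists x.
    move=> S xh u y S' [x1 [-> H1]] [x [x' [E [-> Hd]]]].
    have Hx : EI delta X0 l l x xh by rewrite -E.
    case: (EI_ex l LR x') => xh' Hxh'.
    have sxh' := EI_size Hxh' (leqnn l).
    exists u, y, xh'; split; last by split=> //; exists x'.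
    split; [|split].
    * rewrite !srestr_nil //; lia.
    * rewrite [X in _ = srestr _ (_ :: X) _ _](@srestr_take _ _ xh' _ _ (l-1)); try lia.
      rewrite (F1 LR FU Hl Hx Hd Hxh'). f_equal; lia.
    * by exists x, x'.
  + split.
      move=> xh S [x [-> H]]; split; by exists x.
    split.
      move=> xh [x [H0 Hx]]; exists (EI delta X0 l l x); split; by exists x.
    move=> xh S u y xh' [x1 [-> H1]] [_ [_ [x [x' [Hx [Hx' Hd]]]]]].
    exists u, y, (EI delta X0 l l x'); split; last by split=> //; exists x'.
    exists x, x'; split=> //.
    apply: functional_extensionality => z; apply: propositional_extensionality.
    split=> Hz.
    * by rewrite (EI_uniq FU Hl Hz H1).
    * by rewrite (EI_uniq FU Hl Hz Hx).
- exists (fun xh xp => (exists x, EI delta X0 l l x xh) /\ (exists z, EI delta X0 l 0 z xp) /\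
     forall j, (j < l)%N -> realP delta X0 l (take l.+1 (drop j (xp ++ xh)))).
  split.
    by move=> xh xp [H1 [H2 _]].
  split.
    move=> xh [x [H0 Hx]].
    case: LR => LR1 _; case: (LR1 x H0) => mu [nu [xi [Hb Hx0]]].
    exists (restr (sw nu) (Z.of_nat 0 + Ilo l 0) (Z.of_nat 0 + Ihi l 0)).
    have Hp : EI delta X0 l 0 x (restr (sw nu) (Z.of_nat 0 + Ilo l 0) (Z.of_nat 0 + Ihi l 0)).
      apply/EI_iff; exists mu, nu, xi, 0%N; split=> //.
    split; first by exists x.
    split; first by exists x.
    split; first by exists x.
    have Hf : EI delta X0 l l x (restr (sw nu) (Z.of_nat 0 + Ilo l l) (Z.of_nat 0 + Ihi l l)).
      apply/EI_iff; exists mu, nu, xi, 0%N; split=> //.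
    rewrite (EI_uniq FU Hl Hx Hf).
    move=> j Hj; exists mu, nu, xi, j; split=> //.
    apply: (eq_from_nth (x0:=None)).
      rewrite size_takel; last (rewrite size_drop size_cat !size_restr /Ilo /Ihi; lia).
      rewrite size_restr; lia.
    move=> i; rewrite size_takel; last by rewrite size_drop size_cat !size_restr /Ilo /Ihi; lia.
    move=> Hi; rewrite nth_take // nth_drop nth_cat size_restr /Ilo /Ihi.
    case: (ltnP (j + i) (Z.to_nat (Z.of_nat 0 + (Z.of_nat 0 - 1) - (Z.of_nat 0 + (Z.of_nat 0 - Z.of_nat l)) + 1))) => H.
      rewrite !nth_restr /Ilo /Ihi; try lia. congr sw; lia.
    rewrite !nth_restr /Ilo /Ihi; try lia. congr sw; lia.
  move=> xh xp u y xh' [[x1 H1] [[z1 Hz1] W]] [_ [_ [x [x' [Hx [Hx' Hd]]]]]].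
  have E := F1 LR FU Hl Hx Hd Hx'.
  have sxp := EI_size Hz1 (leq0n l).
  have sxh' := EI_size Hx' (leqnn l).
  have W0 := W 0%N Hl.
  rewrite (win_first (a := Some y) (xh := xh) sxp (ex_intro _ _ E)) in W0.
  case: (F3 Hl sxp W0) => z [u2 [z' [Hd2 [Hz Hz']]]].
  exists u2, y, (drop 1 (xp ++ [:: Some y])).
  have sxp' : size (drop 1 (xp ++ [:: Some y])) = l.
    by rewrite size_drop size_cat sxp [size [:: _]]/=; lia.
  split; last split; last by [].
  + split; [|split].
    * rewrite (@srestr_take _ _ (drop 1 (xp ++ [:: Some y])) _ _ l); try lia.
      rewrite (@srestr_take _ _ xp _ _ l); try lia.
      rewrite !take_oversize ?sxp ?sxp' //.
      rewrite (@srestr_gen _ _ _ _ _ 1 l) ?take_oversize ?sxp' //; try lia.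
      rewrite size_cat sxp [size [:: _]]/=; lia.
    * rewrite !srestr_nil //; lia.
    * by exists z, z'.
  + split; first by exists x'.
    split; first by exists z'.
    move=> j Hj.
    case: (ltnP j.+1 l) => Hj1.
      rewrite (win_shift sxp sxh' E Hj1). exact: W.
    have -> : j = (l - 1)%N by lia.
    rewrite (win_last _ sxp sxh' Hl).
    exact: (F2 LR Hl Hd Hx').
Qed.
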